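(* Let $D\ge 1$, $\mu>1$ and $\theta>0$. Let $(V,T)$ be a Galton–Watson tree of depth $D$ (truncated at generation $D$) with root $v_o$ and offspring distribution of mean $\mu$, and let $V_d$ be the set of nodes at depth $d$. Set \[ \rho_d:=\frac{\theta(\mu-1)}{(\theta-1)(\mu-1)+\mu^d-1},\quad d=1,\dots,D-1,\qquad \rho_D:=0. \] Conditionally on the tree, let $\{Z_v, v\in V\setminus\{v_o\}\}$ be independent Bernoulli variables with $\mathbf{E}[Z_v]=\rho_d$ for $v\in V_d$, and assign labels as follows: the root gets label $0$; in order of increasing depth, a node with $Z_v=0$ takes its parent's label, and a node with $Z_v=1$ takes a new label not used before. Then the expected number of distinct labels among all vertices of the tree is \[ K(\mu,D,\theta)=1+\theta(\mu-1)\sum_{d=1}^{D-1}\frac{1}{1+(\theta\mu-\theta-\mu)\mu^{-d}}. \]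
   Context: The number of distinct labels equals $1+\sum_{v\ne v_o}Z_v$. For $\theta>0$, $\mu>1$ the numbers $\rho_d$ lie in $(0,1]$ with $\rho_1=1$. *)

(* Defs.v *)
From HB Require Import structures.
From mathcomp Require Import all_boot all_order all_algebra.
From mathcomp Require Import all_classical all_reals all_analysis.
Set Implicit Arguments. Unset Strict Implicit. Unset Printing Implicit Defensive.
Import Order.TTheory GRing.Theory Num.Theory.
Local Open Scope classical_set_scope.
Local Open Scope ring_scope.

(* Ulam-Harris words: the root is [::]; the i-th child (i = 0,1,...) of the
   word u is  i :: u  (so the parent of i :: u is u, and depth = size). *)

Fixpoint gw_gen (xi : seq nat -> nat) (d : nat) : seq (seq nat) :=
  match d with
  | 0 => [:: [::]]
  | d'.+1 => flatten [seq [seq i :: u | i <- iota 0 (xi u)] | u <- gw_gen xi d']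
  end.

Definition gw_vertices (xi : seq nat -> nat) (D : nat) : seq (seq nat) :=
  flatten [seq gw_gen xi d | d <- iota 0 D.+1].

(* Labelling: the root has label None (= "0"); a non-root vertex v with
   Z v = true receives the fresh label Some v (never used before), and a
   vertex with Z v = false inherits the label of its parent. *)
Fixpoint gw_label (Z : seq nat -> bool) (u : seq nat) : option (seq nat) :=
  match u with
  | [::] => None
  | _ :: u' => if Z u then Some u else gw_label Z u'
  end.

Definition gw_nlabels (xi : seq nat -> nat) (Z : seq nat -> bool) (D : nat) : nat :=
  size (undup [seq gw_label Z v | v <- gw_vertices xi D]).

Definition gw_rho {R : realType} (mu theta : R) (D d : nat) : R :=
  if d == D then 0
  else theta * (mu - 1) / ((theta - 1) * (mu - 1) + mu ^+ d - 1).

Definition gw_K {R : realType} (mu : R) (D : nat) (theta : R) : R :=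
  1 + theta * (mu - 1) *
      \sum_(1 <= d < D) (1 + (theta * mu - theta - mu) * mu ^- d)^-1.

Definition indep_nat_family {R : realType} {dT : measure_display}
  {T : measurableType dT} (P : probability T R) (I : eqType)
  (X : I -> T -> nat) : Prop :=
  forall (s : seq I) (f : I -> nat), uniq s ->
    P [set w | forall i, i \in s -> X i w = f i] =
    (\prod_(i <- s) P [set w | X i w = f i])%E.

(* Main.v *)
Require Import Defs.
From HB Require Import structures.
From mathcomp Require Import all_boot all_order all_algebra.
From mathcomp Require Import all_classical all_reals all_analysis.
From mathcomp Require Import measurable_realfun.
From mathcomp Require Import ring lra.
Import Order.TTheory GRing.Theory Num.Theory.
Local Open Scope classical_set_scope.
Local Open Scope ring_scope.
Lemma K_identity (R : realType) (D : nat) (mu theta : R) : (1 <= D)%N -> 1 < mu ->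
  1 + \sum_(0 <= d < D.+1) (if d == 0%N then 0 else gw_rho mu theta D d * mu ^+ d)
  = gw_K mu D theta.
Proof.
move=> D1 mu1; rewrite /gw_K; congr (1 + _).
rewrite big_ltn // eqxx add0r big_nat_recr //=.
rewrite (_ : (D == 0%N) = false); last by case: D D1.
rewrite /gw_rho eqxx mul0r addr0 mulr_sumr.
apply: eq_big_nat => d /andP[d1 dD].
rewrite (_ : (d == 0%N) = false); last by case: d d1 {dD}.
rewrite (_ : (d == D) = false); last by apply/negbTE; rewrite neq_ltn dD.
have m0 : mu ^+ d != 0 by rewrite expf_neq0 // gt_eqF // (lt_trans ltr01 mu1).
set m := mu ^+ d; set c := theta * mu - theta - mu.
have -> : (theta - 1) * (mu - 1) + m - 1 = m + c by rewrite /c; ring.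
have -> : 1 + c * m^-1 = (m + c) / m by field.
rewrite invf_div; ring.
Qed.
Section Comb.
Variable xi : seq nat -> nat.

Fixpoint inTree (v : seq nat) : bool :=
  match v with [::] => true | i :: u => (i < xi u)%N && inTree u end.

Lemma mem_gen d v : (v \in gw_gen xi d) = (size v == d) && inTree v.
Proof.
elim: d v => [|d IH] v.
  by case: v => [|i u] //=; rewrite inE.
apply/idP/idP.
  move=> /flatten_mapP [u uin /mapP [i]]; rewrite mem_iota add0n => /andP[_ ilt] ->.
  by move: uin; rewrite IH /= => /andP[/eqP -> ->]; rewrite ilt eqxx.
case: v => [|i u] //= /andP[Hs /andP[ilt Hu]].
apply/flatten_mapP; exists u; first by rewrite IH -(eqn_add2r 1) !addn1 Hs Hu.
by apply/mapP; exists i => //; rewrite mem_iota.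
Qed.

Lemma gen_uniq d : uniq (gw_gen xi d).
Proof.
elim: d => [|d IH] //=.
have := @allpairs_uniq_dep _ (fun _ => nat) _ (fun u i => i :: u) (gw_gen xi d)
  (fun u => iota 0 (xi u)) IH (fun u _ => iota_uniq _ _).
apply.
by move=> [x1 y1] [x2 y2] _ _ /= [-> ->].
Qed.

Lemma size_gen d v : v \in gw_gen xi d -> size v = d.
Proof. by rewrite mem_gen => /andP[/eqP]. Qed.

Lemma mem_vert D v : (v \in gw_vertices xi D) = (size v <= D)%N && inTree v.
Proof.
apply/idP/idP.
  move=> /flatten_mapP [d]; rewrite mem_iota add0n => /andP[_ dD].
  by rewrite mem_gen => /andP[/eqP -> ->]; rewrite -ltnS dD.
move=> /andP[sD Hv]; apply/flatten_mapP; exists (size v).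
  by rewrite mem_iota add0n ltnS.
by rewrite mem_gen eqxx.
Qed.

Lemma vert_uniq_gen (ds : seq nat) : uniq ds -> uniq (flatten [seq gw_gen xi d | d <- ds]).
Proof.
elim: ds => [|d ds IH] //= /andP[dn U].
rewrite cat_uniq gen_uniq IH // andbT.
apply/hasPn => v /flatten_mapP [e ein vin]; apply/negP => vd.
move: dn; rewrite -(size_gen _ _ vd) (size_gen _ _ vin).
by rewrite ein.
Qed.

Variable Z : seq nat -> bool.

Lemma label_spec v : inTree v ->
  gw_label Z v = None \/
  exists u, [/\ gw_label Z v = Some u, u != [::], Z u, inTree u & (size u <= size v)%N].
Proof.
elim: v => [|i u IH] /=; first by left.
move=> /andP[ilt Hu].
case: ifP => Zv.
  by right; exists (i :: u); split => //=; rewrite ilt.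
case: (IH Hu) => [->|[w [-> ? ? ? ?]]]; first by left.
by right; exists w; split => //; apply: leqW.
Qed.

Lemma nlabelsE D :
  gw_nlabels xi Z D = (\sum_(0 <= d < D.+1) count (fun v => (v != [::]) && Z v) (gw_gen xi d)).+1.
Proof.
pose NR := [seq v <- gw_vertices xi D | (v != [::]) && Z v].
have Uv : uniq (gw_vertices xi D) by apply: vert_uniq_gen; apply: iota_uniq.
pose t := None :: map Some NR.
have Ut : uniq t.
  rewrite /t /=; apply/andP; split; first by apply/mapP => -[].
  by rewrite map_inj_uniq ?filter_uniq // => ? ? [].
have Hp : perm_eq (undup [seq gw_label Z v | v <- gw_vertices xi D]) t.
  apply: uniq_perm => //; first exact: undup_uniq.
  move=> x; rewrite mem_undup; apply/mapP/idP.
    move=> [v]; rewrite mem_vert => /andP[sD Hv] ->.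
    case: (label_spec _ Hv) => [->|[u [-> un Zu Hu su]]]; first by rewrite inE.
    rewrite inE /=; apply/mapP; exists u => //.
    by rewrite mem_filter un Zu mem_vert Hu (leq_trans su sD).
  rewrite inE => /orP[/eqP ->|/mapP [u]].
    by exists [::] => //; rewrite mem_vert.
  rewrite mem_filter => /andP[/andP[un Zu] uin] ->.
  exists u => //; case: u un Zu {uin} => [|i u] //= _ -> //.
rewrite /gw_nlabels (perm_size Hp) /t /= size_map size_filter count_flatten.
by rewrite -map_comp sumnE big_map /index_iota subn0.
Qed.
End Comb.
Section WSsec.
Context {R : realType}.
Local Open Scope ereal_scope.

Fixpoint WS (d : nat) (f : seq nat -> \bar R) : \bar R :=
  match d with
  | 0 => f [::]
  | d'.+1 => WS d' (fun u => \sum_(i <oo) f (i :: u))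
  end.

Lemma WS_ext d f g : (forall v, size v = d -> f v = g v) -> WS d f = WS d g.
Proof.
elim: d f g => [|d IH] f g fg /=; first by apply: fg.
apply: IH => u su; apply: eq_eseriesr => i _; apply: fg => /=; by rewrite su.
Qed.

Lemma WS_ge0 d f : (forall v, 0 <= f v) -> 0 <= WS d f.
Proof.
elim: d f => [|d IH] f f0 /=; first exact: f0.
by apply: IH => u; apply: nneseries_ge0 => i _ _; apply: f0.
Qed.

Lemma WS_scale d (c : R) f : (forall v, 0 <= f v) ->
  WS d (fun v => c%:E * f v) = c%:E * WS d f.
Proof.
elim: d f => [|d IH] f f0 //=.
rewrite -IH; last by move=> u; apply: nneseries_ge0 => i _ _; apply: f0.
apply: WS_ext => u _; rewrite nneseriesZl //.
Qed.

Lemma series_fin n (a : nat -> \bar R) : (forall i, 0 <= a i) ->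
  \sum_(i <oo) (if (i < n)%N then a i else 0) = \sum_(i < n) a i.
Proof.
move=> a0.
rewrite (@nneseries_split _ _ 0 n); last by move=> k _; case: ifP.
rewrite add0n eseries0 ?adde0; last by move=> i ni _; rewrite ltnNge ni.
rewrite big_mkord; apply: eq_bigr => i _; by rewrite ltn_ord.
Qed.

Lemma WS_gen (xi : seq nat -> nat) d f : (forall v, 0 <= f v) ->
  WS d (fun v => if v \in gw_gen xi d then f v else 0) = \sum_(v <- gw_gen xi d) f v.
Proof.
elim: d f => [|d IH] f f0.
  by rewrite /= big_seq1.
rewrite /= -/(gw_gen xi d.+1).
rewrite (@WS_ext d _ (fun u => if u \in gw_gen xi d then
                                 \sum_(i < xi u) f (nat_of_ord i :: u) else 0)); last first.
  move=> u su.
  rewrite -(series_fin _ (fun i => f (i :: u))) //.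
  case: ifP => uin.
    apply: eq_eseriesr => i _; rewrite mem_gen /= su eqxx /=.
    by move: uin; rewrite mem_gen => /andP[_ ->]; rewrite andbT.
  rewrite eseries0 // => i _ _; rewrite mem_gen /= su eqxx /=.
  by move: uin; rewrite mem_gen su eqxx /= => ->; rewrite andbF.
rewrite IH; last by move=> u; apply: sume_ge0 => i _; apply: f0.
rewrite big_flatten /= big_map; apply: eq_bigr => u _.
by rewrite big_map -(big_mkord xpredT (fun i => f (i :: u))) /index_iota subn0.
Qed.
End WSsec.
Section Indep.
Context (R : realType) (dT : measure_display) (T : measurableType dT).
Variable P : probability T R.
Local Open Scope ereal_scope.

Lemma meas_pre (Y : T -> nat) (S : set nat) :
  (forall k, measurable [set w | Y w = k]) -> measurable [set w | S (Y w)].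
Proof.
move=> mY.
rewrite (_ : [set w | S (Y w)] = \bigcup_(k in S) [set w | Y w = k]).
  by apply: bigcup_measurable => k _; apply: mY.
apply/seteqP; split => w /=; first by move=> Sw; exists (Y w).
by move=> [k Sk ->].
Qed.

Lemma measure_pre (Y : T -> nat) (S : set nat) :
  (forall k, measurable [set w | Y w = k]) ->
  P [set w | S (Y w)] = \sum_(k <oo | k \in S) P [set w | Y w = k].
Proof.
move=> mY.
rewrite (_ : [set w | S (Y w)] = \bigcup_(k in S) [set w | Y w = k]); last first.
  apply/seteqP; split => w /=; first by move=> Sw; exists (Y w).
  by move=> [k Sk ->].
rewrite (measure_bigcup P S) //.
- by move=> i j _ _ [w [/= H1 H2]]; rewrite -H1 -H2.
Qed.

Variable I : eqType.
Variable X : I -> T -> nat.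
Hypothesis mX : forall i k, measurable [set w | X i w = k].
Hypothesis indX : indep_nat_family P X.

Fixpoint holds (L : seq (I * set nat)) (w : T) : Prop :=
  match L with [::] => True | p :: L' => p.2 (X p.1 w) /\ holds L' w end.

Lemma meas_holds L : measurable [set w | holds L w].
Proof.
elim: L => [|p L IH] /=; first exact: measurableT.
rewrite (_ : [set w | p.2 (X p.1 w) /\ holds L w] =
   [set w | p.2 (X p.1 w)] `&` [set w | holds L w]) //.
by apply: measurableI => //; apply: meas_pre.
Qed.

Lemma meas_pts (s : seq I) f : measurable [set w | forall i, i \in s -> X i w = f i].
Proof.
elim: s => [|j s IH].
  by rewrite (_ : [set w | _] = setT) //; apply/seteqP; split => w //= _ i.
rewrite (_ : [set w | _] = [set w | X j w = f j] `&` [set w | forall i, i \in s -> X i w = f i]).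
  by apply: measurableI.
apply/seteqP; split => w /=.
  by move=> H; split => [|i iS]; apply: H; rewrite inE ?eqxx ?iS ?orbT.
by move=> [H1 H2] i; rewrite inE => /orP[/eqP ->|]; [exact: H1|exact: H2].
Qed.

Lemma prodP_fin (J : Type) (s : seq J) (A : J -> set T) :
  (forall j, measurable (A j)) -> (\prod_(j <- s) P (A j)) \is a fin_num.
Proof.
move=> mA; elim: s => [|j s IH]; first by rewrite big_nil.
by rewrite big_cons fin_numM // fin_num_measure.
Qed.

Lemma prodP_ge0 (J : Type) (s : seq J) (A : J -> set T) :
  0 <= \prod_(j <- s) P (A j).
Proof. by apply: prode_ge0. Qed.

Lemma indep_gen L : forall (s : seq I) f, uniq (s ++ map fst L) ->
  P [set w | (forall i, i \in s -> X i w = f i) /\ holds L w] =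
  (\prod_(i <- s) P [set w | X i w = f i]) * \prod_(p <- L) P [set w | p.2 (X p.1 w)].
Proof.
elim: L => [|[j S] L IH] s f U.
  rewrite big_nil mule1 -indX; last by move: U; rewrite cats0.
  by congr (P _); apply/seteqP; split => w /=; [case|].
have U' : uniq ((j :: s) ++ map fst L).
  by have := perm_uniq (introT permPl (perm_catCA s [:: j] (map fst L))); rewrite /= => <-.
have js : j \notin s by move: U'; rewrite /= mem_cat negb_or => /andP[/andP[]].
pose f' k i := if i == j then k else f i.
rewrite (_ : [set w | _] = \bigcup_(k in S)
   [set w | (forall i, i \in j :: s -> X i w = f' k i) /\ holds L w]); last first.
  apply/seteqP; split => w /=.
    move=> [H [HS HL]]; exists (X j w) => //; split => // i.
    rewrite inE /f' => /orP[/eqP ->|iS]; first by rewrite eqxx.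
    have -> : (i == j) = false by apply/negbTE; apply: contraNneq js => <-.
    exact: H.
  move=> [k Sk [H HL]]; split; last first.
    by split => //; have := H j; rewrite inE eqxx /f' eqxx => ->.
  move=> i iS; have := H i; rewrite inE iS orbT /f'.
  have -> : (i == j) = false by apply/negbTE; apply: contraNneq js => <-.
  by apply.
rewrite (measure_bigcup P S); last 2 first.
- move=> k _; apply: measurableI; [exact: meas_pts|exact: meas_holds].
- move=> k k' _ _ [w [/= [H1 _] [H2 _]]].
  by move: (H1 j) (H2 j); rewrite inE eqxx /f' eqxx => /(_ isT) <- /(_ isT).
set C := (\prod_(i <- s) P [set w | X i w = f i]) *
         \prod_(p <- L) P [set w | p.2 (X p.1 w)].
have Cfin : C \is a fin_num.
  apply: fin_numM; apply: prodP_fin => p; first exact: mX.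
  by apply: meas_pre.
transitivity (\sum_(k <oo | k \in S) ((fine C)%:E * P [set w | X j w = k])).
  apply: eq_eseriesr => k _ /=; rewrite IH // fineK // big_cons /f' eqxx.
  have -> : \prod_(i <- s) P [set w | X i w = (if i == j then k else f i)] =
     \prod_(i <- s) P [set w | X i w = f i].
    apply: eq_big_seq => i iS.
    by have -> : (i == j) = false by apply/negbTE; apply: contraNneq js => <-.
  by rewrite -muleA muleC.
rewrite nneseriesZl // -measure_pre // fineK // big_cons /C /=.
by rewrite -muleA; congr (_ * _); rewrite muleC.
Qed.

Lemma indep_list L : uniq (map fst L) ->
  P [set w | holds L w] = \prod_(p <- L) P [set w | p.2 (X p.1 w)].
Proof.
move=> U; have := indep_gen L [::] (fun _ => 0%N) U.
rewrite big_nil mul1e => <-; congr (P _).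
by apply/seteqP; split => w /=; [|case].
Qed.
End Indep.
Arguments holds {dT T I}.
Section WSint.
Context (R : realType) (dT : measure_display) (T : measurableType dT).
Variable mu : {measure set T -> \bar R}.
Local Open Scope ereal_scope.

Lemma WS_meas (d : nat) (g : seq nat -> T -> \bar R) :
  (forall v w, 0 <= g v w) -> (forall v, measurable_fun setT (g v)) ->
  measurable_fun setT (fun w => WS d (fun v => g v w)).
Proof.
elim: d g => [|d IH] g g0 mg /=; first exact: mg.
apply: (IH (fun u w => \sum_(i <oo) g (i :: u) w)).
  by move=> u w; apply: nneseries_ge0 => i _ _; apply: g0.
move=> u; apply: (@ge0_emeasurable_sum _ _ _ _ (fun i => g (i :: u)) xpredT).
  by move=> k x _ _; apply: g0.
by move=> k _; apply: mg.
Qed.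

Lemma WS_integral (d : nat) (g : seq nat -> T -> \bar R) :
  (forall v w, 0 <= g v w) -> (forall v, measurable_fun setT (g v)) ->
  \int[mu]_w WS d (fun v => g v w) = WS d (fun v => \int[mu]_w g v w).
Proof.
elim: d g => [|d IH] g g0 mg //=.
have h0 : forall u w, 0 <= \sum_(i <oo) g (i :: u) w.
  by move=> u w; apply: nneseries_ge0 => i _ _; apply: g0.
have hm : forall u, measurable_fun setT (fun w => \sum_(i <oo) g (i :: u) w).
  move=> u; apply: (@ge0_emeasurable_sum _ _ _ _ (fun i => g (i :: u)) xpredT).
    by move=> k x _ _; apply: g0.
  by move=> k _; apply: mg.
rewrite (IH (fun u w => \sum_(i <oo) g (i :: u) w) h0 hm).
apply: WS_ext => u _; rewrite integral_nneseries // => n; apply: mg.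
Qed.
End WSint.
Section Main.
Context (R : realType) (dT : measure_display) (T : measurableType dT).
Variable P : probability T R.
Variables (D : nat) (mu theta : R) (p : nat -> R).
Variables (xi : seq nat -> T -> nat) (Z : seq nat -> T -> bool).
Hypothesis mxi : forall u k, measurable [set w | xi u w = k].
Hypothesis mZ : forall u, measurable [set w | Z u w].
Hypothesis hp : forall u k, P [set w | xi u w = k] = (p k)%:E.
Hypothesis hmu : (\sum_(k <oo) ((k%:R * p k)%:E))%E = mu%:E.

Definition Xf (i : seq nat + seq nat) : T -> nat :=
  match i with inl u => xi u | inr u => fun w => nat_of_bool (Z u w) end.
Hypothesis hind : indep_nat_family P Xf.

Local Open Scope ereal_scope.

Lemma mXf i k : measurable [set w | Xf i w = k].
Proof.
case: i => [u|u] /=; first exact: mxi.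
case: k => [|[|k]].
- rewrite (_ : [set w | _] = ~` [set w | Z u w]); first exact: measurableC.
  by apply/seteqP; split => w /=; case: (Z u w).
- rewrite (_ : [set w | _] = [set w | Z u w]) //.
  by apply/seteqP; split => w /=; case: (Z u w).
- rewrite (_ : [set w | _] = set0) //.
  by apply/seteqP; split => w /=; case: (Z u w).
Qed.

Fixpoint Lv (v : seq nat) : seq ((seq nat + seq nat) * set nat) :=
  match v with
  | [::] => [::]
  | i :: u => (inl u, [set k | (i < k)%N]) :: Lv u
  end.

Lemma holds_Lv v w : holds Xf (Lv v) w <-> inTree (fun u => xi u w) v.
Proof.
elim: v => [|i u IH] //=.
split => [[H1 /IH H2]|/andP[H1 /IH H2]] //.
by rewrite H2 andbT; apply/idP.
Qed.

Lemma fst_Lv v x : x \in map fst (Lv v) -> exists2 u, x = inl u & (size u < size v)%N.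
Proof.
elim: v => [|i u IH] //=; rewrite inE => /orP[/eqP ->|/IH [u' -> su]].
  by exists u.
by exists u' => //; apply: ltnW.
Qed.

Lemma uniq_Lv v : uniq (map fst (Lv v)).
Proof.
elim: v => [|i u IH] //=; rewrite IH andbT.
by apply/negP => /fst_Lv [u' [<-]]; rewrite ltnn.
Qed.

Let indL := @indep_list _ _ _ P _ Xf mXf hind.

Lemma setT_Lv v : [set w | inTree (fun u => xi u w) v] = [set w | holds Xf (Lv v) w].
Proof. by apply/seteqP; split => w /= /holds_Lv. Qed.

Lemma PT_cons i u : P [set w | inTree (fun u => xi u w) (i :: u)] =
  P [set w | (i < xi u w)%N] * P [set w | inTree (fun u => xi u w) u].
Proof.
rewrite !setT_Lv !indL ?uniq_Lv // [Lv (i :: u)]/= big_cons.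
by [].
Qed.

Lemma PTZ v : P [set w | inTree (fun u => xi u w) v && Z v w] =
  P [set w | Z v w] * P [set w | inTree (fun u => xi u w) v].
Proof.
rewrite setT_Lv indL ?uniq_Lv //.
have U : uniq (map fst ((inr v, [set 1%N]) :: Lv v)).
  rewrite /= uniq_Lv andbT; apply/negP => /fst_Lv [u' []] //.
rewrite (_ : [set w | _] = [set w | holds Xf ((inr v, [set 1%N]) :: Lv v) w]).
  rewrite indL // big_cons /=; congr (P _ * _).
  by apply/seteqP; split => w /=; case: (Z v w).
apply/seteqP; split => w /=.
  by move=> /andP[/holds_Lv H ->].
by case: (Z v w) => /= -[] // _ /holds_Lv ->.
Qed.

Lemma p_ge0 k : (0 <= p k)%R.
Proof. by rewrite -lee_fin -(hp [::] k). Qed.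

Lemma tail_sum u : \sum_(i <oo) P [set w | (i < xi u w)%N] = mu%:E.
Proof.
transitivity (\sum_(i <oo) \sum_(k <oo) (if (i < k)%N then (p k)%:E else 0)).
  apply: eq_eseriesr => i _.
  rewrite (@measure_pre _ _ _ P (xi u) [set k | (i < k)%N] (mxi u)).
  rewrite eseries_mkcond; apply: eq_eseriesr => k _; rewrite hp.
  rewrite (_ : (k \in _) = (i < k)%N) //.
  by apply/idP/idP => [/set_mem|/mem_set].
rewrite nneseries_interchange; last by move=> i k; case: ifP; rewrite // lee_fin p_ge0.
rewrite -hmu; apply: eq_eseriesr => k _.
have := series_fin k (fun _ => (p k)%:E) (fun _ => p_ge0 k); move=> /= ->.
by rewrite sumEFin sumr_const card_ord mulr_natl.
Qed.

Lemma WS_tree d : WS d (fun v => P [set w | inTree (fun u => xi u w) v]) = (mu ^+ d)%:E.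
Proof.
elim: d => [|d IH] /=.
  by rewrite (_ : [set w | _] = setT) ?probability_setT //; apply/seteqP; split => w.
rewrite (@WS_ext _ d _ (fun u => mu%:E * P [set w | inTree (fun u => xi u w) u])).
  by rewrite WS_scale // IH -EFinM exprS.
move=> u _.
have Ffin : P [set w | inTree (fun u => xi u w) u] \is a fin_num.
  by rewrite setT_Lv fin_num_measure //; apply: meas_holds; apply: mXf.
transitivity (\sum_(i <oo) ((fine (P [set w | inTree (fun u => xi u w) u]))%:E *
                             P [set w | (i < xi u w)%N])).
  by apply: eq_eseriesr => i _; rewrite PT_cons fineK // muleC.
by rewrite nneseriesZl // tail_sum fineK // muleC.
Qed.
Hypothesis hZ : forall u, (1 <= size u <= D)%N ->
  P [set w | Z u w] = (gw_rho mu theta D (size u))%:E.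

Definition gg d v w : \bar R :=
  if v \in gw_gen (fun u => xi u w) d then (((v != [::]) && Z v w)%:R)%:E else 0.

Lemma gg_ge0 d v w : 0 <= gg d v w.
Proof. by rewrite /gg; case: ifP => // _; rewrite lee_fin ler0n. Qed.

Lemma setTZ v : [set w | inTree (fun u => xi u w) v && Z v w] =
  [set w | holds Xf ((inr v, [set 1%N]) :: Lv v) w].
Proof.
apply/seteqP; split => w /=.
  by move=> /andP[/holds_Lv H ->].
by case: (Z v w) => /= -[] // _ /holds_Lv ->.
Qed.

Lemma mTZ v : measurable [set w | inTree (fun u => xi u w) v && Z v w].
Proof. by rewrite setTZ; apply: meas_holds; apply: mXf. Qed.

Lemma gg_ind d v : size v = d -> (1 <= d)%N ->
  gg d v = (fun w => (\1_[set w | inTree (fun u => xi u w) v && Z v w] w)%:E).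
Proof.
move=> sv d1; apply/funext => w; rewrite /gg mem_gen sv eqxx /= indicE.
have -> : (v != [::]) = true by apply/eqP => v0; move: sv d1; rewrite v0 => /= <-.
case: (boolP (inTree (fun u => xi u w) v && Z v w)) => H.
  by rewrite mem_set //=; case/andP: H => -> ->.
rewrite memNset //=; move: H; case: (inTree (fun u => xi u w) v) => //= /negbTE -> //.
Qed.

Lemma gg_meas d v : measurable_fun setT (gg d v).
Proof.
case: (boolP ((size v == d) && (1 <= d)%N)) => [/andP[/eqP sv d1]|H].
  rewrite gg_ind //; apply/measurable_EFinP; exact: measurable_indic (mTZ v).
rewrite (_ : gg d v = fun=> 0); first exact: measurable_cst.
apply/funext => w; rewrite /gg mem_gen.
case: (boolP (size v == d)) => [/eqP sv|] //=; rewrite sv in H.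
by move: H; rewrite eqxx /=; case: d sv => //; case: v => //= _ _.
Qed.

Lemma Egg d v : size v = d -> (1 <= d <= D)%N ->
  \int[P]_w gg d v w = (gw_rho mu theta D d)%:E * P [set w | inTree (fun u => xi u w) v].
Proof.
move=> sv /andP[d1 dD].
rewrite gg_ind // integral_indic; last exact: mTZ.
rewrite setIT.
transitivity (P [set w | inTree (fun u => xi u w) v && Z v w]); first by [].
by rewrite PTZ hZ ?sv ?d1 ?dD.
exact: measurableT.
Qed.

Lemma Egg0 : \int[P]_w gg 0 [::] w = 0.
Proof.
rewrite (_ : gg 0 [::] = fun=> 0) ?integral0 //.
Qed.

Lemma count_sumE (s : seq (seq nat)) (a : pred (seq nat)) :
  \sum_(v <- s) ((a v)%:R)%:E = ((count a s)%:R)%:E :> \bar R.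
Proof.
elim: s => [|x s IH]; first by rewrite big_nil.
by rewrite big_cons IH /= natrD EFinD.
Qed.

Lemma N_eq w : (((gw_nlabels (fun u => xi u w) (fun u => Z u w) D)%:R)%:E : \bar R) =
  1 + \sum_(0 <= d < D.+1) WS d (fun v => gg d v w).
Proof.
rewrite nlabelsE -addn1 natrD EFinD addeC natr_sum -sumEFin; congr (_ + _).
apply: eq_bigr => d _; rewrite /gg WS_gen; last by move=> v; rewrite lee_fin ler0n.
by rewrite count_sumE.
Qed.

Lemma EN : \int[P]_w (((gw_nlabels (fun u => xi u w) (fun u => Z u w) D)%:R)%:E : \bar R)
  = 1 + \sum_(0 <= d < D.+1) ((if d == 0%N then 0 else gw_rho mu theta D d * mu ^+ d)%:E).
Proof.
rewrite (eq_integral (fun w => 1 + \sum_(0 <= d < D.+1) WS d (fun v => gg d v w))); last first.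
  by move=> w _; rewrite N_eq.
have hm d : measurable_fun setT (fun w => WS d (fun v => gg d v w)).
  by apply: WS_meas => [v w|v]; [exact: gg_ge0|exact: gg_meas].
rewrite ge0_integralD //; try (by move=> w _; apply: sume_ge0 => d _; apply: WS_ge0 => v; apply: gg_ge0);
  try (by apply: emeasurable_sum).
rewrite ge0_integral_sum //; try (by move=> d w _; apply: WS_ge0 => v; apply: gg_ge0).
have -> : \int[P]_w (1 : \bar R) = 1.
  have := integral_cst P measurableT 1 => H.
  transitivity (1 * P setT); first exact: H.
  rewrite mul1e; exact: probability_setT.
congr (_ + _); apply: eq_big_nat => d /andP[_ dD].
rewrite WS_integral; last 2 first.
- by move=> v w; apply: gg_ge0.
- by move=> v; apply: gg_meas.
case: d dD => [|d] dD; first by rewrite /= Egg0.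
rewrite (@WS_ext _ d.+1 _ (fun v => (gw_rho mu theta D d.+1)%:E *
           P [set w | inTree (fun u => xi u w) v])); last first.
  by move=> v sv; rewrite Egg // sv.
by rewrite WS_scale ?WS_tree -?EFinM.
Qed.
End Main.
Theorem lemma8p1 (R : realType) (dT : measure_display) (T : measurableType dT)
  (P : probability T R) (D : nat) (mu theta : R) (p : nat -> R)
  (xi : seq nat -> T -> nat) (Z : seq nat -> T -> bool) :
  (1 <= D)%N -> 1 < mu -> 0 < theta ->
  (* measurability of the basic events *)
  (forall u k, measurable [set w | xi u w = k]) ->
  (forall u, measurable [set w | Z u w]) ->
  (* offspring numbers have law p, of mean mu *)
  (forall u k, P [set w | xi u w = k] = (p k)%:E) ->
  (\sum_(k <oo) ((k%:R * p k)%:E))%E = mu%:E ->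
  (* Z_v is Bernoulli(rho_d) for v at depth d in 1..D *)
  (forall u, (1 <= size u <= D)%N ->
     P [set w | Z u w] = (gw_rho mu theta D (size u))%:E) ->
  (* all offspring numbers and all Z's are mutually independent *)
  indep_nat_family P
    (fun i : seq nat + seq nat => match i with
       | inl u => xi u
       | inr u => fun w => nat_of_bool (Z u w) end) ->
  ('E_P[fun w => (gw_nlabels (fun u => xi u w) (fun u => Z u w) D)%:R])%E
    = (gw_K mu D theta)%:E.
Proof.
move=> D1 mu1 th0 mxi mZ hp hmu hZ hind.
rewrite unlock.
have := @EN R dT T P D mu theta p xi Z mxi mZ hp hmu hind hZ.
move=> ->.
by rewrite -K_identity // EFinD sumEFin.
Qed.
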